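(* Let $k\geq 0$ be fixed. There are constants $c_1$ and $q^*_k$ (depending on $k$) such that for all $q\geq q^*_k$ the following holds: if $\vec{x}=(x_0,\ldots,x_k)$ is a vector of nonnegative integers with $wt_q(\vec{x})\geq 2^q+c_1\binom{q}{k}$, then Paul has a winning strategy in the $q$-round pathological liar game with $k$ lies and initial state $\vec{x}$.
   Context: Pathological liar game: a state is a vector $\vec{x}=(x_0,\ldots,x_k)$ of nonnegative integers. In each of $q$ rounds Paul chooses a legal question $\vec{a}=(a_0,\ldots,a_k)$ with integers $0\leq a_i\leq x_i$, and Carole answers Y or N; the new state is $Y(\vec{x},\vec{a})=(a_0,\,a_1+x_0-a_0,\,\ldots,\,a_k+x_{k-1}-a_{k-1})$ or $N(\vec{x},\vec{a})=(x_0-a_0,\,x_1-a_1+a_0,\,\ldots,\,x_k-a_k+a_{k-1})$ respectively. Paul wins iff after $q$ rounds $\sum_i x_i\geq 1$. Weight: $wt_q(\vec{x})=\sum_{i=0}^k x_i\binom{q}{\leq k-i}$ where $\binom{q}{\leq m}=\sum_{j=0}^m\binom{q}{j}$. *)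

(* Defs.v *)
From mathcomp Require Import all_boot.
Set Implicit Arguments. Unset Strict Implicit. Unset Printing Implicit Defensive.

Definition state (k : nat) := {ffun 'I_k.+1 -> nat}.

Definition legal k (x a : state k) : Prop := forall i, a i <= x i.

Definition Yst k (x a : state k) : state k :=
  [ffun i : 'I_k.+1 =>
     if val i is j.+1 then a i + (x (inord j) - a (inord j)) else a i].

Definition Nst k (x a : state k) : state k :=
  [ffun i : 'I_k.+1 =>
     if val i is j.+1 then x i - a i + a (inord j) else x i - a i].

(* Paul wins the q-round pathological liar game from x (Carole answering
   adversarially): after q rounds, sum_i x_i >= 1. *)
Fixpoint paul_wins k (q : nat) (x : state k) : Prop :=
  match q with
  | 0 => 1 <= \sum_(i < k.+1) x i
  | q'.+1 => exists a : state k, legal x a /\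
               paul_wins q' (Yst x a) /\ paul_wins q' (Nst x a)
  end.

Definition binom_le (q m : nat) : nat := \sum_(j < m.+1) 'C(q, j).

Definition wt k (q : nat) (x : state k) : nat :=
  \sum_(i < k.+1) x i * binom_le q (k - i).

(* Main.v *)
Require Import Defs.
From mathcomp Require Import all_boot zify.
Set Implicit Arguments. Unset Strict Implicit. Unset Printing Implicit Defensive.

Lemma bl_r0 r : binom_le r 0 = 1.
Proof. by rewrite /binom_le big_ord_recl big_ord0 bin0. Qed.

Lemma bl_0r m : binom_le 0 m = 1.
Proof.
rewrite /binom_le big_ord_recl bin0 big1 ?addn0 //.
Qed.

Lemma bl_S r m : binom_le r.+1 m.+1 = binom_le r m.+1 + binom_le r m.
Proof.
rewrite /binom_le big_ord_recl bin0.
rewrite (big_ord_recl m.+1) bin0.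
under eq_bigr => i _ do rewrite /bump /= binS.
rewrite big_split /=. rewrite addnA. congr (_ + _).
Qed.

Lemma bl_gt0 r m : 0 < binom_le r m.
Proof. by rewrite /binom_le big_ord_recl bin0. Qed.

Lemma bl_le_pow r m : binom_le r m <= 2 ^ r.
Proof.
elim: r m => [|r IH] [|m]; rewrite ?bl_0r ?bl_r0 //.
  by rewrite expn_gt0.
rewrite bl_S expnS mul2n -addnn. exact: leq_add.
Qed.

Lemma bl_mono_m r m m' : m <= m' -> binom_le r m <= binom_le r m'.
Proof.
move=> H. rewrite /binom_le.
rewrite -(subnKC H) -addSn big_split_ord /=. exact: leq_addr.
Qed.

Lemma bl_step_r r m : binom_le r m <= binom_le r.+1 m.
Proof. case: m => [|m]; first by rewrite !bl_r0. rewrite bl_S; exact: leq_addr. Qed.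

Lemma bl_mono_r r r' m : r <= r' -> binom_le r m <= binom_le r' m.
Proof.
move=> H. rewrite -(subnKC H). elim: (r' - r) => [|d IH]; first by rewrite addn0.
rewrite addnS. exact: leq_trans IH (bl_step_r _ _).
Qed.

Lemma bl_mul t r m : binom_le (t + r) m <= binom_le t m * binom_le r m.
Proof.
elim: t m => [|t IH] m.
  by rewrite add0n bl_0r mul1n.
case: m => [|m]; first by rewrite !bl_r0.
rewrite addSn !bl_S mulnDl. apply: leq_add; first exact: IH.
apply: leq_trans (IH m) _. apply: leq_mul => //. exact: bl_mono_m.
Qed.

Lemma bl_C t m : m <= t -> binom_le t m <= 2 ^ m * 'C(t, m).
Proof.
elim: t m => [|t IH] m.
  by rewrite leqn0 => /eqP ->; rewrite bl_r0 bin0.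
case: m => [|m] Hm; first by rewrite bl_r0 bin0.
rewrite bl_S binS mulnDr.
have Hm2 : binom_le t m <= 2 ^ m.+1 * 'C(t, m).
  apply: leq_trans (IH m _) _; first by rewrite -ltnS.
  apply: leq_mul => //. by rewrite leq_exp2l.
case: (ltnP m t) => Hmt.
  apply: leq_add => //. exact: IH.
have Emt : m = t by apply/eqP; rewrite eqn_leq Hmt -ltnS Hm.
subst m.
have -> : binom_le t t.+1 = binom_le t t.
  by rewrite /binom_le big_ord_recr /= bin_small // addn0.
rewrite bin_small // muln0 add0n binn muln1 expnS mul2n -addnn.
have := IH t (leqnn t). rewrite binn muln1 => H. exact: leq_add.
Qed.

Lemma bin_ratio t m j : j <= m -> (t - m) * 'C(t, j) <= m.+1 * 'C(t, j.+1).
Proof.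
move=> Hj.
apply: (@leq_trans ((t - j) * 'C(t, j))).
  apply: leq_mul => //. exact: leq_sub2l.
rewrite -mul_bin_left. apply: leq_mul => //.
Qed.

Lemma bl_ratio t m : (t - m) * binom_le t m <= m.+1 * binom_le t m.+1.
Proof.
rewrite /binom_le (big_ord_recl m.+1) big_distrr mulnDr big_distrr /=.
apply: leq_trans (leq_addl _ _).
apply: leq_sum => i _.
rewrite /bump add1n. apply: bin_ratio. by rewrite -ltnS.
Qed.

Lemma sum_C_lower r k : \sum_(i < k) 'C(r, k - i) <= binom_le r k.
Proof.
rewrite /binom_le -(big_mkord xpredT (fun j => 'C(r, j))) big_rev_mkord subn0.
rewrite big_ord_recr /=. apply: leq_trans (leq_addr _ _).
apply: eq_leq; apply: eq_bigr => i _. by rewrite /= subSS.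
Qed.

Lemma exp_mono a b j : a <= b -> a ^ j <= b ^ j.
Proof. move=> H; elim: j => [|j IH] //; rewrite !expnS; exact: leq_mul. Qed.

Lemma bin_le_pow r j : 'C(r, j) <= r ^ j.
Proof.
elim: r j => [|r IH] [|j] //=; rewrite ?bin0 ?expn0 //.
rewrite binS. apply: leq_trans (leq_add (IH j.+1) (IH j)) _.
have H : r ^ j <= r.+1 ^ j by apply: exp_mono.
rewrite !expnS. nia.
Qed.

Lemma bl_poly r k : binom_le r k <= r.+1 ^ k.
Proof.
elim: k => [|k IH]; first by rewrite bl_r0.
rewrite /binom_le big_ord_recr /= -/(binom_le r k).
have H1 := bin_le_pow r k.+1.
have H : r ^ k <= r.+1 ^ k by apply: exp_mono.
rewrite !expnS in H1 *. nia.
Qed.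

Lemma ratio_pow m j : 2 * j <= m -> m.+1 ^ j * m <= m ^ j * (m + 2 * j).
Proof.
elim: j => [|j IH] H; first by rewrite !expn0 !mul1n addn0.
have H' : 2 * j <= m by lia.
have IH' := IH H'.
rewrite !expnS.
set a := m ^ j in IH' *. set b := m.+1 ^ j in IH' *.
have E : m.+1 * (m + 2 * j) <= m * (m + 2 * j.+1) by nia.
nia.
Qed.

Lemma pow_step m d : 2 * d <= m -> 0 < m -> m.+1 ^ d <= 2 * m ^ d.
Proof.
move=> H Hm. have R := ratio_pow H.
set a := m ^ d in R *. set b := m.+1 ^ d in R *.
have : b * m <= (2 * a) * m by nia.
by rewrite leq_pmul2r.
Qed.

Lemma pow2_sq p : 4 <= p -> p * p <= 2 ^ p.
Proof.
elim: p => [|p IH] //. rewrite leq_eqVlt => /orP [/eqP <- //|H].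
have := IH H. rewrite expnS. nia.
Qed.

Lemma growth A d : exists R, forall s, R <= s -> A * s.+1 ^ d <= 2 ^ s.
Proof.
pose p := A + d + 4.
have Hp : 4 <= p by rewrite /p; lia.
have Hsq := pow2_sq Hp.
have Hpos : 0 < 2 ^ p by rewrite expn_gt0.
exists (2 ^ p).-1.
have base : A * (2 ^ p).-1.+1 ^ d <= 2 ^ (2 ^ p).-1.
  rewrite prednK // -expnM.
  apply: (@leq_trans (2 ^ A * 2 ^ (p * d))).
    apply: leq_mul => //. exact: ltnW (ltn_expl _ (ltnSn 1)).
  rewrite -expnD leq_exp2l //.
  have : A + p * d + 1 <= p * p by rewrite /p; nia.
  lia.
move=> s Hs. rewrite -(subnKC Hs).
elim: (s - (2 ^ p).-1) => [|n IH]; first by rewrite addn0.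
rewrite addnS expnS.
set m := ((2 ^ p).-1 + n).+1.
have Hm : 2 * d <= m.
  rewrite /m. have : 2 * d <= p * p by rewrite /p; nia. lia.
have := pow_step Hm (ltn0Sn _).
move: IH; rewrite -/m. set a := m ^ d. set b := m.+1 ^ d. nia.
Qed.

Lemma growthB A k : exists R, forall s, R <= s -> A * (binom_le s k * binom_le s k) <= 2 ^ s.
Proof.
have [R HR] := growth A (k + k).
exists R => s Hs. apply: leq_trans (HR s Hs).
rewrite leq_mul2l expnD. apply/orP; right. apply: leq_mul; exact: bl_poly.
Qed.

Definition Yf (f g : nat -> nat) (i : nat) : nat :=
  if i is j.+1 then g i + (f j - g j) else g 0.
Definition Nf (f g : nat -> nat) (i : nat) : nat :=
  if i is j.+1 then f i - g i + g j else f 0 - g 0.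

Fixpoint pw (k q : nat) (f : nat -> nat) : Prop :=
  match q with
  | 0 => 1 <= \sum_(i < k.+1) f i
  | q'.+1 => exists g : nat -> nat, (forall i, i <= k -> g i <= f i) /\
              pw k q' (Yf f g) /\ pw k q' (Nf f g)
  end.

Lemma pw_ext k q f f' : (forall i, i <= k -> f i = f' i) -> pw k q f -> pw k q f'.
Proof.
elim: q f f' => [|q IH] f f' E /=.
  have -> : \sum_(i < k.+1) f i = \sum_(i < k.+1) f' i.
    by apply: eq_bigr => i _; apply: E; rewrite -ltnS.
  by [].
move=> [g [Hg [HY HN]]]; exists g; split; first by move=> i Hi; rewrite -(E i Hi); exact: Hg.
split.
- apply: IH HY => -[|i] Hi //=. rewrite E //; exact: ltnW.
- apply: IH HN => -[|i] Hi //=; rewrite !E //; exact: ltnW.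
Qed.

Lemma pw_mono k q f f' : (forall i, i <= k -> f i <= f' i) -> pw k q f -> pw k q f'.
Proof.
elim: q f f' => [|q IH] f f' E /=.
  move=> H; apply: leq_trans H _; apply: leq_sum => i _; apply: E; by rewrite -ltnS.
move=> [g [Hg [HY HN]]]; exists g; split.
  move=> i Hi; exact: leq_trans (Hg i Hi) (E i Hi).
split.
- apply: IH HY => -[|i] Hi //=. rewrite leq_add2l. apply: leq_sub2r. apply: E; exact: ltnW.
- apply: IH HN => -[|i] Hi //=. apply: leq_sub2r; exact: E.
  rewrite leq_add2r. apply: leq_sub2r; exact: E.
Qed.

Lemma pw_paul k q (x : state k) : pw k q (fun i => x (inord i)) -> paul_wins q x.
Proof.
elim: q x => [|q IH] x /=.
  have -> : \sum_(i < k.+1) x (inord i) = \sum_(i < k.+1) x i.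
    by apply: eq_bigr => i _; rewrite inord_val.
  by [].
move=> [g [Hg [HY HN]]].
exists [ffun i : 'I_k.+1 => g (val i)]; split.
  move=> i; rewrite ffunE; have := Hg i; rewrite inord_val; apply; by rewrite -ltnS.
split; apply: IH.
- apply: pw_ext HY => i Hi; rewrite /Yst ffunE.
  have E : forall j, j <= k -> val (@inord k j) = j by move=> j Hj; rewrite /= inordK // ltnS.
  rewrite E //. case: i Hi => [|j] Hj /=; rewrite !ffunE !E //; exact: ltnW.
- apply: pw_ext HN => i Hi; rewrite /Nst ffunE.
  have E : forall j, j <= k -> val (@inord k j) = j by move=> j Hj; rewrite /= inordK // ltnS.
  rewrite E //. case: i Hi => [|j] Hj /=; rewrite !ffunE !E //; exact: ltnW.
Qed.

Definition Wt k r (f : nat -> nat) := \sum_(i < k.+1) f i * binom_le r (k - i).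

Lemma sumY k f g (c : nat -> nat) :
  \sum_(i < k.+1) Yf f g i * c i =
  \sum_(i < k.+1) g i * c i + \sum_(i < k) (f i - g i) * c i.+1.
Proof.
rewrite big_ord_recl [in RHS]big_ord_recl /= -addnA; congr (_ + _).
rewrite -big_split /=; apply: eq_bigr => i _.
by rewrite /bump /= add1n add0n mulnDl.
Qed.

Lemma sumN k f g (c : nat -> nat) :
  \sum_(i < k.+1) Nf f g i * c i =
  \sum_(i < k.+1) (f i - g i) * c i + \sum_(i < k) g i * c i.+1.
Proof.
rewrite big_ord_recl [in RHS]big_ord_recl /= -addnA; congr (_ + _).
rewrite -big_split /=; apply: eq_bigr => i _.
by rewrite /bump /= add1n add0n mulnDl.
Qed.

Lemma bl_Sk r k i : i < k -> binom_le r.+1 (k - i) = binom_le r (k - i) + binom_le r (k - i.+1).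
Proof. move=> H. by rewrite -(subnSK H) bl_S. Qed.

Lemma Wt_cons k r f g : (forall i, i <= k -> g i <= f i) ->
  Wt k r.+1 f = Wt k r (Yf f g) + Wt k r (Nf f g).
Proof.
move=> Hg. rewrite /Wt (sumY k f g (fun i => binom_le r (k - i))) (sumN k f g (fun i => binom_le r (k - i))) /=.
have H1 : \sum_(i < k.+1) g i * binom_le r (k - i) + \sum_(i < k.+1) (f i - g i) * binom_le r (k - i)
   = \sum_(i < k.+1) f i * binom_le r (k - i).
  rewrite -big_split; apply: eq_bigr => i _ /=. rewrite -mulnDl subnKC //. apply: Hg; by rewrite -ltnS.
have H2 : \sum_(i < k) (f i - g i) * binom_le r (k - i.+1) + \sum_(i < k) g i * binom_le r (k - i.+1)
   = \sum_(i < k) f i * binom_le r (k - i.+1).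
  rewrite -big_split; apply: eq_bigr => i _ /=. rewrite -mulnDl subnK //. apply: Hg; exact: ltnW.
have -> : \sum_(i < k.+1) g i * binom_le r (k - i) + \sum_(i < k) (f i - g i) * binom_le r (k - i.+1) +
   (\sum_(i < k.+1) (f i - g i) * binom_le r (k - i) + \sum_(i < k) g i * binom_le r (k - i.+1))
   = (\sum_(i < k.+1) g i * binom_le r (k - i) + \sum_(i < k.+1) (f i - g i) * binom_le r (k - i)) +
     (\sum_(i < k) (f i - g i) * binom_le r (k - i.+1) + \sum_(i < k) g i * binom_le r (k - i.+1)) by lia.
rewrite H1 H2 !big_ord_recr /= subnn !bl_r0.
have -> : \sum_(i < k) f i * binom_le r.+1 (k - i) =
   \sum_(i < k) f i * binom_le r (k - i) + \sum_(i < k) f i * binom_le r (k - i.+1).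
  rewrite -big_split; apply: eq_bigr => i _ /=. by rewrite -mulnDr -bl_Sk.
by rewrite addnAC.
Qed.

Definition upd (g : nat -> nat) (k v : nat) : nat -> nat := fun i : nat => if i == k then v else g i.

Lemma Wt_split k r f : Wt k r f = \sum_(i < k) f i * binom_le r (k - i) + f k.
Proof. by rewrite /Wt big_ord_recr /= subnn bl_r0 muln1. Qed.

Lemma sum_upd_lt k (g : nat -> nat) v (F : nat -> nat -> nat) :
  \sum_(i < k) F i (upd g k v i) = \sum_(i < k) F i (g i).
Proof. apply: eq_bigr => i _. by rewrite /upd ltn_eqF. Qed.

Lemma WY_upd k r f g v : Wt k r (Yf f (upd g k v)) = Wt k r (Yf f (upd g k 0)) + v.
Proof.
rewrite /Wt !(sumY k f _ (fun i => binom_le r (k - i))) /= !big_ord_recr /=.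
rewrite !(sum_upd_lt k g _ (fun i x => x * binom_le r (k - i))).
rewrite !(sum_upd_lt k g _ (fun i x => (f i - x) * binom_le r (k - i.+1))).
rewrite /upd eqxx subnn bl_r0. lia.
Qed.

Lemma WN_upd k r f g v : v <= f k ->
  Wt k r (Nf f (upd g k v)) + v = Wt k r (Nf f (upd g k 0)).
Proof.
move=> Hv.
rewrite /Wt !(sumN k f _ (fun i => binom_le r (k - i))) /= !big_ord_recr /=.
rewrite !(sum_upd_lt k g _ (fun i x => (f i - x) * binom_le r (k - i))).
rewrite !(sum_upd_lt k g _ (fun i x => x * binom_le r (k - i.+1))).
rewrite /upd eqxx subnn bl_r0. lia.
Qed.

Lemma KL k r f g h :
  h <= Wt k r (Yf f (upd g k 0)) + f k -> h <= Wt k r (Nf f (upd g k 0)) ->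
  2 * h <= Wt k r (Yf f (upd g k 0)) + Wt k r (Nf f (upd g k 0)) ->
  exists v, v <= f k /\ h <= Wt k r (Yf f (upd g k v)) /\ h <= Wt k r (Nf f (upd g k v)).
Proof.
move=> H1 H2 H3. exists (h - Wt k r (Yf f (upd g k 0))).
have Hv : h - Wt k r (Yf f (upd g k 0)) <= f k by lia.
split => //. rewrite WY_upd. split; first lia.
have := WN_upd r g Hv. lia.
Qed.

Lemma pw_step k r f g v : (forall i, i < k -> g i <= f i) -> v <= f k ->
  pw k r (Yf f (upd g k v)) -> pw k r (Nf f (upd g k v)) -> pw k r.+1 f.
Proof.
move=> Hg Hv HY HN. exists (upd g k v); split => // i Hi.
rewrite /upd. case: eqP => [->//|/eqP Hne]. apply: Hg. by rewrite ltn_neqAle Hne Hi.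
Qed.

Definition nL k (f : nat -> nat) := \sum_(i < k) f i.
Definition Dl k (f : nat -> nat) := \sum_(i < k.+1) f i * (k - i).

Lemma nL_Y k f g : (forall i, i <= k -> g i <= f i) -> nL k (Yf f g) <= nL k f.
Proof.
move=> Hg. case: k Hg => [|k] Hg; first by rewrite /nL !big_ord0.
rewrite /nL.
have -> : \sum_(i < k.+1) Yf f g i = \sum_(i < k.+1) Yf f g i * 1 by apply: eq_bigr => i _; rewrite muln1.
rewrite (sumY k f g (fun _ => 1)) /=.
have -> : \sum_(i < k.+1) f i = \sum_(i < k.+1) g i * 1 + \sum_(i < k.+1) (f i - g i).
  rewrite -big_split /=; apply: eq_bigr => i _. rewrite muln1 subnKC //. apply: Hg. exact: ltnW.
rewrite leq_add2l big_ord_recr /=. apply: leq_trans (leq_addr _ _).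
apply: leq_sum => i _. by rewrite muln1.
Qed.

Lemma nL_N k f g : (forall i, i <= k -> g i <= f i) -> nL k (Nf f g) <= nL k f.
Proof.
move=> Hg. case: k Hg => [|k] Hg; first by rewrite /nL !big_ord0.
rewrite /nL.
have -> : \sum_(i < k.+1) Nf f g i = \sum_(i < k.+1) Nf f g i * 1 by apply: eq_bigr => i _; rewrite muln1.
rewrite (sumN k f g (fun _ => 1)) /=.
have -> : \sum_(i < k.+1) f i = \sum_(i < k.+1) (f i - g i) * 1 + \sum_(i < k.+1) g i.
  rewrite -big_split /=; apply: eq_bigr => i _. rewrite muln1 subnK //. apply: Hg. exact: ltnW.
rewrite leq_add2l big_ord_recr /=. apply: leq_trans (leq_addr _ _).
apply: leq_sum => i _. by rewrite muln1.
Qed.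

Lemma Dl_Y k f g : (forall i, i <= k -> g i <= f i) ->
  Dl k (Yf f g) + \sum_(i < k) (f i - g i) = Dl k f.
Proof.
move=> Hg. rewrite /Dl (sumY k f g (fun i => k - i)) /=.
have -> : \sum_(i < k.+1) f i * (k - i) = \sum_(i < k.+1) g i * (k - i) + \sum_(i < k.+1) (f i - g i) * (k - i).
  rewrite -big_split /=; apply: eq_bigr => i _. rewrite -mulnDl subnKC //. apply: Hg. by rewrite -ltnS.
rewrite -addnA; congr (_ + _).
rewrite big_ord_recr /= subnn muln0 addn0 -big_split /=; apply: eq_bigr => i _.
have Hi : i < k := ltn_ord i.
rewrite -[in RHS](subnSK Hi). rewrite mulnS. lia.
Qed.

Lemma Dl_N k f g : (forall i, i <= k -> g i <= f i) ->
  Dl k (Nf f g) + \sum_(i < k) g i = Dl k f.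
Proof.
move=> Hg. rewrite /Dl (sumN k f g (fun i => k - i)) /=.
have -> : \sum_(i < k.+1) f i * (k - i) = \sum_(i < k.+1) (f i - g i) * (k - i) + \sum_(i < k.+1) g i * (k - i).
  rewrite -big_split /=; apply: eq_bigr => i _. rewrite -mulnDl subnK //. apply: Hg. by rewrite -ltnS.
rewrite -addnA; congr (_ + _).
rewrite [in RHS]big_ord_recr /= subnn muln0 addn0 -big_split /=; apply: eq_bigr => i _.
have Hi : i < k := ltn_ord i.
rewrite -[in RHS](subnSK Hi). rewrite mulnS. lia.
Qed.

Lemma AB_bounds k r f g : (forall i, i < k -> g i <= f i) ->
  [/\ Wt k r (Yf f (upd g k 0)) <= nL k f * 2 ^ r,
      f k <= Wt k r (Nf f (upd g k 0)) &
      Wt k r (Nf f (upd g k 0)) <= f k + nL k f * 2 ^ r].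
Proof.
move=> Hg.
have EY : Wt k r (Yf f (upd g k 0)) =
  \sum_(i < k) (g i * binom_le r (k - i) + (f i - g i) * binom_le r (k - i.+1)).
  rewrite /Wt (sumY k f _ (fun i => binom_le r (k - i))) /= big_ord_recr /=.
  rewrite !(sum_upd_lt k g _ (fun i x => x * binom_le r (k - i))).
  rewrite !(sum_upd_lt k g _ (fun i x => (f i - x) * binom_le r (k - i.+1))).
  by rewrite /upd eqxx mul0n addn0 big_split.
have EN : Wt k r (Nf f (upd g k 0)) = f k +
  \sum_(i < k) ((f i - g i) * binom_le r (k - i) + g i * binom_le r (k - i.+1)).
  rewrite /Wt (sumN k f _ (fun i => binom_le r (k - i))) /= big_ord_recr /=.
  rewrite !(sum_upd_lt k g _ (fun i x => (f i - x) * binom_le r (k - i))).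
  rewrite !(sum_upd_lt k g _ (fun i x => x * binom_le r (k - i.+1))).
  rewrite /upd eqxx subn0 subnn bl_r0 muln1 big_split /=. lia.
have Hb : forall i : 'I_k, g i * binom_le r (k - i) + (f i - g i) * binom_le r (k - i.+1) <= f i * 2 ^ r.
  move=> i. have := Hg i (ltn_ord i). have := bl_le_pow r (k - i). have := bl_le_pow r (k - i.+1). nia.
have Hb' : forall i : 'I_k, (f i - g i) * binom_le r (k - i) + g i * binom_le r (k - i.+1) <= f i * 2 ^ r.
  move=> i. have := Hg i (ltn_ord i). have := bl_le_pow r (k - i). have := bl_le_pow r (k - i.+1). nia.
rewrite /nL big_distrl /=. split.
- rewrite EY. exact: leq_sum.
- rewrite EN. exact: leq_addr.
- rewrite EN leq_add2l. exact: leq_sum.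
Qed.

Lemma upd_le k (f : nat -> nat) v : v <= f k -> forall i, i <= k -> upd f k v i <= f i.
Proof. move=> Hv i _; rewrite /upd; case: eqP => [->//|]. done. Qed.

Lemma upd2_le k (g f : nat -> nat) v : (forall i, i < k -> g i <= f i) -> v <= f k ->
  forall i, i <= k -> upd g k v i <= f i.
Proof.
move=> Hg Hv i Hi; rewrite /upd; case: eqP => [->//|/eqP Hne].
apply: Hg; by rewrite ltn_neqAle Hne Hi.
Qed.

Lemma Wt0 k f : Wt k 0 f = \sum_(i < k.+1) f i.
Proof. apply: eq_bigr => i _; by rewrite bl_0r muln1. Qed.

Lemma low_le k r (f : nat -> nat) : \sum_(i < k) f i * binom_le r (k - i) <= nL k f * binom_le r k.
Proof.
rewrite /nL big_distrl /=. apply: leq_sum => i _. apply: leq_mul => //.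
apply: bl_mono_m. exact: leq_subr.
Qed.

Lemma endgame k M R2 : 0 < R2 -> (forall s, R2 <= s -> 2 * M * binom_le s k <= 2 ^ s) ->
  forall r f, 2 ^ r <= Wt k r f ->
  nL k f <= 1 \/ (nL k f <= M /\ R2 + Dl k f <= r) -> pw k r f.
Proof.
move=> HR2 HM. elim=> [|r IH] f Hw Hc.
  by move: Hw; rewrite Wt0 expn0.
have Hpow : 2 ^ r.+1 = 2 * 2 ^ r by rewrite expnS.
case: (leqP (nL k f) 1) => HnL.
- have [HA HB1 HB2] := @AB_bounds k r f f (fun i _ => leqnn (f i)).
  have Hcons := @Wt_cons k r f (upd f k 0) (upd_le (leq0n (f k))).
  have HnL' : nL k f * 2 ^ r <= 2 ^ r by rewrite -{2}(mul1n (2 ^ r)) leq_mul2r HnL orbT.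
  have [v [Hv [HY HN]]] : exists v, v <= f k /\ 2 ^ r <= Wt k r (Yf f (upd f k v)) /\
      2 ^ r <= Wt k r (Nf f (upd f k v)).
    apply: KL; lia.
  apply: (pw_step (g := f) (v := v)) => //.
  + apply: IH => //. left. apply: leq_trans (nL_Y (upd_le Hv)) HnL.
  + apply: IH => //. left. apply: leq_trans (nL_N (upd_le Hv)) HnL.
- case: Hc => [Hc|[HM' HD]]; first by rewrite leqNgt HnL in Hc.
  have Hs : R2 <= r.+1 by apply: leq_trans HD; exact: leq_addr.
  have HMB := HM _ Hs.
  have Hlow := @low_le k r.+1 f.
  have Hfk : 2 ^ r <= f k.
    move: Hw; rewrite Wt_split => Hw.
    have : nL k f * binom_le r.+1 k <= M * binom_le r.+1 k by rewrite leq_mul2r HM' orbT.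
    lia.
  case: (pickP (fun j : 'I_k => 0 < f j)) => [j Hj|H0]; last first.
    move: HnL; rewrite /nL big1 // => i _. by have := H0 i; rewrite lt0n => /negbFE/eqP.
  pose g := upd f j (f j - 1).
  have Hg : forall i, i < k -> g i <= f i by move=> i _; rewrite /g /upd; case: eqP => [->|]; [exact: leq_subr|].
  have [HA HB1 HB2] := @AB_bounds k r f g Hg.
  have Hcons := @Wt_cons k r f (upd g k 0) (upd2_le Hg (leq0n (f k))).
  have [v [Hv [HY HN]]] : exists v, v <= f k /\ 2 ^ r <= Wt k r (Yf f (upd g k v)) /\
      2 ^ r <= Wt k r (Nf f (upd g k v)).
    apply: KL; lia.
  have Hleg := upd2_le Hg Hv.
  have E1 : \sum_(i < k) (f i - upd g k v i) = 1.
    rewrite (bigD1 j) //= big1 => [|i Hij].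
      rewrite /upd ltn_eqF // /g /upd eqxx. lia.
    have Hij' : (nat_of_ord i == nat_of_ord j) = false by apply/negbTE; exact: Hij.
    by rewrite /upd ltn_eqF // /g /upd Hij' subnn.
  have E2 : \sum_(i < k) upd g k v i + \sum_(i < k) (f i - upd g k v i) = nL k f.
    rewrite -big_split /=; apply: eq_bigr => i _. rewrite subnKC //. apply: Hleg. exact: ltnW.
  apply: (pw_step (g := g) (v := v)) => //.
  + apply: IH => //. right. split; first exact: leq_trans (nL_Y Hleg) HM'.
    have := Dl_Y Hleg. lia.
  + apply: IH => //. right. split; first exact: leq_trans (nL_N Hleg) HM'.
    have := Dl_N Hleg. lia.
Qed.

Fixpoint Id (x0 : nat -> nat) (t : nat) : nat -> nat :=
  match t with
  | 0 => x0
  | t'.+1 => fun i => Id x0 t' i + (if i is j.+1 then Id x0 t' j else 0)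
  end.

Lemma Id_mono x0 t i : Id x0 t i <= Id x0 t.+1 i.
Proof. by rewrite /= leq_addr. Qed.

Lemma Id_mono_t x0 t t' i : t <= t' -> Id x0 t i <= Id x0 t' i.
Proof.
move=> H; rewrite -(subnKC H); elim: (t' - t) => [|d IH]; first by rewrite addn0.
rewrite addnS; exact: leq_trans IH (Id_mono _ _ _).
Qed.

Lemma Id_closed x0 t i : Id x0 t i = \sum_(j < i.+1) x0 j * 'C(t, i - j).
Proof.
elim: t i => [|t IH] i.
  rewrite big_ord_recr /= subnn bin0 muln1 big1 ?add0n // => j _.
  rewrite bin0n. have Hj : j < i := ltn_ord j. by rewrite subn_eq0 leqNgt Hj muln0.
case: i => [|i] /=.
  by rewrite IH !big_ord1 /= !bin0 addn0.
rewrite !IH big_ord_recr /= subnn bin0 muln1.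
rewrite [X in _ = X]big_ord_recr /= subnn bin0 muln1.
rewrite addnAC; congr (_ + _).
rewrite -big_split /=; apply: eq_bigr => j _.
have Hj : j < i.+1 := ltn_ord j.
rewrite -mulnDr subSn // binS //.
Qed.

Definition Sh (f : nat -> nat) := fun i => f i + (if i is j.+1 then f j else 0).

Lemma Wt_Sh m r f : Wt m r.+1 f = Wt m r (Sh f).
Proof.
rewrite (@Wt_cons m r f (fun _ => 0)) // /Wt -big_split /=; apply: eq_bigr => i _.
rewrite -mulnDl /Sh /Yf /Nf. case: (nat_of_ord i) => [|j] /=; lia.
Qed.

Lemma Id_cons m x0 t r : Wt m (r + t) x0 = Wt m r (Id x0 t).
Proof.
elim: t r => [|t IH] r; first by rewrite addn0.
rewrite addnS -addSn IH Wt_Sh. done.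
Qed.

Definition prev (f : nat -> nat) i := if i is j.+1 then f j else 0.

Definition Track K x0 t (f : nat -> nat) := forall i, i < K ->
  2 ^ t * f i <= Id x0 t i + i.+1 * 2 ^ t /\ Id x0 t i <= 2 ^ t * f i + i.+1 * 2 ^ t.

Lemma Track0 K x0 : Track K x0 0 x0.
Proof. move=> i _; rewrite /= expn0 mul1n; split; lia. Qed.

Lemma Track_step K x0 t f f' : Track K x0 t f ->
  (forall i, i < K -> 2 * f' i <= f i + prev f i + 1 /\ f i + prev f i <= 2 * f' i + 1) ->
  Track K x0 t.+1 f'.
Proof.
move=> HT Hs i Hi. have [a b] := HT i Hi. have [c d] := Hs i Hi.
rewrite [Id x0 t.+1 i]/= expnS.
move: a b c d. case: i Hi => [|j] Hi /=; set P := 2 ^ t.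
  move=> a b c d. rewrite addn0 /=. split; nia.
have [e g] := HT j (ltnW Hi). move: e g; rewrite -/P => e g a b c d. split; nia.
Qed.

Lemma half_Y f g i : (forall j, j <= i -> g j = f j %/ 2) ->
  2 * Yf f g i <= f i + prev f i + 1 /\ f i + prev f i <= 2 * Yf f g i + 1.
Proof.
move=> Hg. case: i Hg => [|j] Hg /=; rewrite Hg //.
  split; lia.
rewrite Hg //. split; lia.
Qed.

Lemma half_N f g i : (forall j, j <= i -> g j = f j %/ 2) ->
  2 * Nf f g i <= f i + prev f i + 1 /\ f i + prev f i <= 2 * Nf f g i + 1.
Proof.
move=> Hg. case: i Hg => [|j] Hg /=; rewrite Hg //.
  split; lia.
rewrite Hg //. split; lia.
Qed.

Lemma EY k r f g : Wt k r (Yf f (upd g k 0)) =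
  \sum_(i < k) (g i * binom_le r (k - i) + (f i - g i) * binom_le r (k - i.+1)).
Proof.
rewrite /Wt (sumY k f _ (fun i => binom_le r (k - i))) /= big_ord_recr /=.
rewrite !(sum_upd_lt k g _ (fun i x => x * binom_le r (k - i))).
rewrite !(sum_upd_lt k g _ (fun i x => (f i - x) * binom_le r (k - i.+1))).
by rewrite /upd eqxx mul0n addn0 big_split.
Qed.

Lemma EN k r f g : Wt k r (Nf f (upd g k 0)) = f k +
  \sum_(i < k) ((f i - g i) * binom_le r (k - i) + g i * binom_le r (k - i.+1)).
Proof.
rewrite /Wt (sumN k f _ (fun i => binom_le r (k - i))) /= big_ord_recr /=.
rewrite !(sum_upd_lt k g _ (fun i x => (f i - x) * binom_le r (k - i))).
rewrite !(sum_upd_lt k g _ (fun i x => x * binom_le r (k - i.+1))).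
rewrite /upd eqxx subn0 subnn bl_r0 muln1 big_split /=. lia.
Qed.

Lemma bl_succ r m : binom_le r m.+1 = binom_le r m + 'C(r, m.+1).
Proof. by rewrite /binom_le big_ord_recr. Qed.

Lemma sum_C_eq r k : \sum_(i < k) 'C(r, k - i) + 1 = binom_le r k.
Proof.
rewrite /binom_le -(big_mkord xpredT (fun j => 'C(r, j))) big_rev_mkord subn0.
rewrite big_ord_recr /= subnn bin0. congr (_ + _).
Qed.

Lemma half_weights k r f g : (forall i, i < k -> g i = f i %/ 2) ->
  let PY := \sum_(i < k) (g i * binom_le r (k - i) + (f i - g i) * binom_le r (k - i.+1)) in
  let PN := \sum_(i < k) ((f i - g i) * binom_le r (k - i) + g i * binom_le r (k - i.+1)) in
  PY <= PN /\ PN <= PY + \sum_(i < k) 'C(r, k - i).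
Proof.
move=> Hg PY PN.
have T : forall i : 'I_k,
   g i * binom_le r (k - i) + (f i - g i) * binom_le r (k - i.+1) <=
   (f i - g i) * binom_le r (k - i) + g i * binom_le r (k - i.+1) /\
   (f i - g i) * binom_le r (k - i) + g i * binom_le r (k - i.+1) <=
   g i * binom_le r (k - i) + (f i - g i) * binom_le r (k - i.+1) + 'C(r, k - i).
  move=> i. have Hi : i < k := ltn_ord i.
  rewrite -(subnSK Hi) bl_succ Hg //.
  set B := binom_le r (k - i.+1). set C := 'C(r, (k - i.+1).+1).
  have : f i %/ 2 <= f i - f i %/ 2 <= f i %/ 2 + 1 by apply/andP; split; lia.
  move=> /andP [h1 h2]. split; nia.
split.
- apply: leq_sum => i _. exact: (T i).1.
- rewrite /PY -big_split. apply: leq_sum => i _. exact: (T i).2.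
Qed.

Lemma ideal_low_small k R1 r0 x0 :
  Wt k r0 x0 <= 2 ^ r0.+1 -> k * (2 ^ R1.+2 + 1) <= r0 -> R1 <= r0 ->
  \sum_(i < k) Id x0 (r0 - R1) i < 2 ^ (r0 - R1).
Proof.
move=> HW Hr HR.
set t := r0 - R1.
have Hrt : r0 = R1 + t by rewrite /t subnKC.
case: k HW Hr => [|k] HW Hr; first by rewrite big_ord0 expn_gt0.
have S1 : \sum_(i < k.+1) Id x0 t i <= Wt k r0 x0.
  rewrite Hrt (Id_cons k x0 t R1) /Wt. apply: leq_sum => i _.
  by rewrite -{1}(muln1 (Id x0 t i)) leq_mul2l bl_gt0 orbT.
have S2 : 2 ^ R1.+2 * Wt k r0 x0 <= Wt k.+1 r0 x0.
  rewrite /Wt big_distrr /= [X in _ <= X]big_ord_recr /=. apply: leq_trans (leq_addr _ _).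
  apply: leq_sum => i _. have Hi : i <= k by rewrite -ltnS.
  rewrite subSn // mulnCA leq_mul2l. apply/orP; right.
  set m := k - i.
  have Hm : 2 ^ R1.+2 * m.+1 <= r0 - m.
    have : m.+1 <= k.+1 by rewrite /m ltnS leq_subr.
    move=> H. have : m.+1 * 2 ^ R1.+2 <= k.+1 * 2 ^ R1.+2 by rewrite leq_mul2r H orbT.
    lia.
  have := bl_ratio r0 m.
  have : 2 ^ R1.+2 * m.+1 * binom_le r0 m <= (r0 - m) * binom_le r0 m by rewrite leq_mul2r Hm orbT.
  move=> H1 H2. have H3 := leq_trans H1 H2.
  rewrite mulnAC [X in _ <= X]mulnC leq_mul2r /= in H3. exact: H3.
have E : 2 ^ r0.+1 = 2 ^ R1.+1 * 2 ^ t by rewrite Hrt -expnD addSn.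
have E2 : 2 ^ R1.+2 = 2 ^ R1.+1 * 2 by rewrite expnS mulnC.
set S := \sum_(i < k.+1) Id x0 t i in S1 *.
have H : 2 ^ R1.+1 * (2 * S) <= 2 ^ R1.+1 * 2 ^ t.
  rewrite -E mulnA -E2. apply: leq_trans HW. apply: leq_trans S2. by rewrite leq_mul2l S1 orbT.
rewrite leq_pmul2l ?expn_gt0 // in H.
have Ht : 0 < 2 ^ t by rewrite expn_gt0.
lia.
Qed.

Lemma Ik_bound k M R1 r0 x0 r :
  (forall s, R1 <= s -> 2 ^ k * (M + 2) * (binom_le s k * binom_le s k) <= 2 ^ s) ->
  2 ^ r0 <= Wt k r0 x0 -> 2 ^ k * (M + 2) * binom_le r0 k <= x0 k ->
  R1 <= r -> r <= r0 ->
  2 ^ (r0 - r) * ((M + 2) * binom_le r k) <= Id x0 (r0 - r) k.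
Proof.
move=> HR1 HW Hx Hr Hr0.
set t := r0 - r.
have Hrt : r0 = t + r by rewrite /t subnK.
have HB := bl_mono_r k Hr0.
case: (leqP t k) => Htk.
  apply: leq_trans (Id_mono_t x0 k (leq0n t)). rewrite /=.
  apply: leq_trans Hx. rewrite mulnA. apply: leq_mul => //. apply: leq_mul => //.
  by rewrite leq_exp2l.
rewrite Id_closed.
have T : forall j : 'I_k.+1, binom_le r0 (k - j) <= 2 ^ k * binom_le r k * 'C(t, k - j).
  move=> j. rewrite Hrt. apply: leq_trans (bl_mul _ _ _) _.
  have H1 := bl_C (leq_trans (leq_subr j k) (ltnW Htk)).
  have H2 : binom_le r (k - j) <= binom_le r k by apply: bl_mono_m; exact: leq_subr.
  have H3 : 2 ^ (k - j) <= 2 ^ k by rewrite leq_exp2l // leq_subr.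
  apply: leq_trans (leq_mul H1 H2) _.
  rewrite mulnAC. apply: leq_mul => //. apply: leq_mul => //.
have S : Wt k r0 x0 <= 2 ^ k * binom_le r k * \sum_(j < k.+1) x0 j * 'C(t, k - j).
  rewrite big_distrr /=. apply: leq_sum => j _. rewrite mulnCA leq_mul2l T orbT //.
have P := HR1 r Hr.
have Hpos : 0 < 2 ^ k * binom_le r k by rewrite muln_gt0 expn_gt0 bl_gt0.
rewrite -(leq_pmul2l Hpos). apply: leq_trans S. apply: leq_trans HW.
rewrite Hrt expnD. nia.
Qed.

Lemma sum_lowB k r (f : nat -> nat) c :
  \sum_(i < k) (f i + c i) * binom_le r (k - i) =
  \sum_(i < k) f i * binom_le r (k - i) + \sum_(i < k) c i * binom_le r (k - i).
Proof. rewrite -big_split; apply: eq_bigr => i _; by rewrite mulnDl. Qed.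

Lemma phase2 k M R2 R1 r0 x0 :
  0 < R2 ->
  (forall s, R2 <= s -> 2 * M * binom_le s k <= 2 ^ s) ->
  \sum_(i < k) i.+1 <= M ->
  R2 + k * M <= R1 ->
  (forall s, R1 <= s -> 2 ^ k * (M + 2) * (binom_le s k * binom_le s k) <= 2 ^ s) ->
  2 ^ r0 <= Wt k r0 x0 -> Wt k r0 x0 <= 2 ^ r0.+1 ->
  2 ^ k * (M + 2) * binom_le r0 k <= x0 k ->
  k * (2 ^ R1.+2 + 1) <= r0 ->
  forall d f, R1 + d <= r0 -> Track k x0 (r0 - (R1 + d)) f ->
    Wt k r0 x0 + 1 <= 2 ^ (r0 - (R1 + d)) * (Wt k (R1 + d) f + 1) ->
    pw k (R1 + d) f.
Proof.
move=> HR2 HM HMs HR1 HR1p HW0 HW0u Hx0 Hr0.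
elim=> [|d IH] f Hd HT HW.
-
  rewrite addn0 in Hd HT HW *.
  set t := r0 - R1 in HT HW.
  have Hrt : r0 = R1 + t by rewrite /t subnKC.
  have Hpos : 0 < 2 ^ t by rewrite expn_gt0.
  have Hw : 2 ^ R1 <= Wt k R1 f.
    have : 2 ^ t * 2 ^ R1 < 2 ^ t * (Wt k R1 f + 1).
      rewrite -expnD addnC -Hrt. lia.
    rewrite ltn_pmul2l // addn1 ltnS. done.
  have Hsmall := ideal_low_small HW0u Hr0 Hd.
  rewrite -/t in Hsmall.
  have HnL : nL k f <= M.
    have : 2 ^ t * nL k f <= \sum_(i < k) Id x0 t i + 2 ^ t * M.
      rewrite /nL big_distrr /=.
      apply: (@leq_trans (\sum_(i < k) (Id x0 t i + i.+1 * 2 ^ t))).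
        apply: leq_sum => i _. exact: (HT i (ltn_ord i)).1.
      rewrite big_split /= leq_add2l -big_distrl /= mulnC leq_mul2l HMs orbT //.
    move=> H. have : 2 ^ t * nL k f < 2 ^ t * M.+1 by rewrite mulnS; lia.
    by rewrite ltn_pmul2l.
  have HDl : Dl k f <= k * M.
    apply: (@leq_trans (k * nL k f)); last by rewrite leq_mul2l HnL orbT.
    rewrite /Dl /nL big_ord_recr /= subnn muln0 addn0 big_distrr /=.
    apply: leq_sum => i _. rewrite mulnC leq_mul2r leq_subr orbT //.
  apply: (endgame HR2 HM Hw). right. split => //. lia.
-
  have Hd' : R1 + d < r0 by rewrite addnS in Hd.
  rewrite addnS in HT HW *.
  set r := R1 + d in Hd' HT HW *.
  set t := r0 - r.+1 in HT HW.
  have Ht1 : t.+1 = r0 - r by rewrite /t subnSK.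
  have Hrr : R1 <= r.+1 by rewrite /r; lia.
  have HIk := Ik_bound HR1p HW0 Hx0 Hrr Hd'.
  rewrite -/t in HIk.
  have HId : \sum_(i < k) Id x0 t i * binom_le r.+1 (k - i) + Id x0 t k = Wt k r0 x0.
    have -> : r0 = r.+1 + t by rewrite /t subnKC.
    by rewrite (Id_cons k x0 t r.+1) Wt_split.
  have Hfk : binom_le r.+1 k <= f k.
    move: HW; rewrite [Wt k r.+1 f]Wt_split => HW.
    have L1 : 2 ^ t * \sum_(i < k) f i * binom_le r.+1 (k - i) <=
              \sum_(i < k) Id x0 t i * binom_le r.+1 (k - i) + 2 ^ t * (M * binom_le r.+1 k).
      rewrite big_distrr /=.
      apply: (@leq_trans (\sum_(i < k) (Id x0 t i + i.+1 * 2 ^ t) * binom_le r.+1 (k - i))).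
        apply: leq_sum => i _. rewrite mulnA leq_mul2r. by rewrite (HT i (ltn_ord i)).1 orbT.
      rewrite sum_lowB leq_add2l.
      apply: (@leq_trans (\sum_(i < k) i.+1 * 2 ^ t * binom_le r.+1 k)).
        apply: leq_sum => i _. rewrite leq_mul2l. apply/orP; right. apply: bl_mono_m. exact: leq_subr.
      rewrite -big_distrl -big_distrl /=.
      apply: (@leq_trans (M * 2 ^ t * binom_le r.+1 k)); first by rewrite !leq_mul2r HMs !orbT.
      by rewrite (mulnA (2 ^ t)) (mulnC (2 ^ t) M).
    have Hpos : 0 < 2 ^ t by rewrite expn_gt0.
    set P := 2 ^ t in L1 HW HIk Hpos.
    set Lw := \sum_(i < k) f i * binom_le r.+1 (k - i) in L1 HW.
    set Li := \sum_(i < k) Id x0 t i * binom_le r.+1 (k - i) in L1 HId.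
    set B := binom_le r.+1 k in L1 HIk *.
    have : P * ((M + 2) * B) < P * (M * B + f k + 1) by nia.
    rewrite ltn_pmul2l //. have := bl_gt0 r.+1 k. rewrite -/B. nia.
  pose g := fun i => f i %/ 2.
  have Hg : forall i, i < k -> g i <= f i by move=> i _; rewrite /g; lia.
  have [Hle1 Hle2] := @half_weights k r f g (fun i _ => erefl).
  have HY0 := @EY k r f g. have HN0 := @EN k r f g.
  have Hcons := @Wt_cons k r f (upd g k 0) (upd2_le Hg (leq0n (f k))).
  have HC := @sum_C_lower r k.
  have HBr := @bl_step_r r k.
  set W := Wt k r.+1 f in HW Hcons.
  have [v [Hv [HYv HNv]]] : exists v, v <= f k /\ W %/ 2 <= Wt k r (Yf f (upd g k v)) /\
      W %/ 2 <= Wt k r (Nf f (upd g k v)).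
    apply: KL; lia.
  have Hleg := upd2_le Hg Hv.
  have Hhalf : forall j, j < k -> upd g k v j = f j %/ 2.
    move=> j Hj. by rewrite /upd ltn_eqF.
  apply: (pw_step (g := g) (v := v)) => //.
  + apply: IH; first by rewrite /r in Hd'; lia.
    * rewrite -Ht1. apply: (Track_step HT) => i Hi. apply: half_Y => j Hj.
      apply: Hhalf. exact: leq_ltn_trans Hj Hi.
    * rewrite -Ht1 expnS. apply: leq_trans HW _. rewrite [2 * 2 ^ t]mulnC -mulnA leq_mul2l.
      apply/orP; right. rewrite /W /r in HYv HNv *. lia.
  + apply: IH; first by rewrite /r in Hd'; lia.
    * rewrite -Ht1. apply: (Track_step HT) => i Hi. apply: half_N => j Hj.
      apply: Hhalf. exact: leq_ltn_trans Hj Hi.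
    * rewrite -Ht1 expnS. apply: leq_trans HW _. rewrite [2 * 2 ^ t]mulnC -mulnA leq_mul2l.
      apply/orP; right. rewrite /W /r in HYv HNv *. lia.
Qed.

Lemma phase1 k M R2 R1 q f0 :
  0 < R2 ->
  (forall s, R2 <= s -> 2 * M * binom_le s k <= 2 ^ s) ->
  \sum_(i < k) i.+1 <= M ->
  R2 + k * M <= R1 ->
  (forall s, R1 <= s -> 2 ^ k * (M + 2) * (binom_le s k * binom_le s k) <= 2 ^ s) ->
  2 ^ q + 2 ^ k * binom_le q k <= Wt k q f0 ->
  Wt k q f0 + 2 ^ k * binom_le q k <= 2 ^ q.+1 ->
  binom_le q k * 2 ^ k * (2 ^ k * (M + 2) * binom_le q k + k.+1) <= 2 ^ q ->
  k <= q -> R1 <= q - k -> k * (2 ^ R1.+2 + 1) <= q - k ->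
  forall n t f, t + n = k -> Track k.+1 f0 t f ->
    Wt k q f0 + binom_le q k <= 2 ^ t * (Wt k (q - t) f + binom_le q k) ->
    2 ^ t * Wt k (q - t) f + binom_le q k <= Wt k q f0 + 2 ^ t * binom_le q k ->
    pw k (q - t) f.
Proof.
move=> HR2 HM HMs HR1 HR1p HWl HWu HQ3 Hkq HR1q Hr0.
set W := Wt k q f0 in HWl HWu *. set B := binom_le q k in HWl HWu HQ3 *.
elim=> [|n IH] t f Htn HT L1 U1.
- rewrite addn0 in Htn. subst t.
  set r0 := q - k in L1 U1 HR1q Hr0 *.
  have Eq : 2 ^ q = 2 ^ k * 2 ^ r0 by rewrite -expnD /r0 subnKC.
  have Eq1 : 2 ^ q.+1 = 2 ^ k * 2 ^ r0.+1 by rewrite -expnD /r0 addnS subnKC.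
  have Hk : 0 < 2 ^ k by rewrite expn_gt0.
  have HW0 : 2 ^ r0 <= Wt k r0 f.
    rewrite -(leq_pmul2l Hk) -Eq. move: L1 HWl. set X := Wt k r0 f. nia.
  have HW0u : Wt k r0 f <= 2 ^ r0.+1.
    rewrite -(leq_pmul2l Hk) -Eq1. move: U1 HWu. set X := Wt k r0 f. nia.
  have Hx0 : 2 ^ k * (M + 2) * binom_le r0 k <= f k.
    have [_ HTk] := HT k (ltnSn k).
    have HId : \sum_(j < k.+1) f0 j <= Id f0 k k.
      rewrite Id_closed. apply: leq_sum => j _. rewrite -{1}(muln1 (f0 j)) leq_mul2l.
      by rewrite bin_gt0 leq_subr orbT.
    have HBS : W <= B * \sum_(j < k.+1) f0 j.
      rewrite /W /Wt big_distrr /=. apply: leq_sum => j _. rewrite mulnC leq_mul2r.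
      apply/orP; right. apply: bl_mono_m. exact: leq_subr.
    have HBpos : 0 < B := bl_gt0 q k.
    have H1 : B * (2 ^ k * (2 ^ k * (M + 2) * B + k.+1)) <= B * Id f0 k k.
      apply: leq_trans (leq_trans HBS _); last by rewrite leq_mul2l HId orbT.
      rewrite mulnA. apply: leq_trans HQ3 _. lia.
    rewrite leq_pmul2l // in H1.
    have H2 : 2 ^ k * (2 ^ k * (M + 2) * B + k.+1) <= 2 ^ k * (f k + k.+1).
      apply: leq_trans H1 _. lia.
    rewrite leq_pmul2l // leq_add2r in H2.
    apply: leq_trans H2. rewrite leq_mul2l. apply/orP; right. apply: bl_mono_r. exact: leq_subr.
  have H := @phase2 k M R2 R1 r0 f HR2 HM HMs HR1 HR1p HW0 HW0u Hx0 Hr0 (r0 - R1) f.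
  rewrite subnKC // subnn expn0 mul1n in H. apply: H => //.
  exact: Track0.
-
  have Htk : t < k by lia.
  have Hqt : q - t = (q - t.+1).+1 by rewrite subnSK //; apply: leq_trans Htk Hkq.
  rewrite Hqt in L1 U1 *.
  set r := q - t.+1 in L1 U1 *.
  pose g := fun i => f i %/ 2.
  pose v := f k %/ 2.
  have Hg : forall i, i < k -> g i <= f i by move=> i _; rewrite /g; lia.
  have Hv : v <= f k by rewrite /v; lia.
  have Hleg := upd2_le Hg Hv.
  have Hcons := @Wt_cons k r f (upd g k v) Hleg.
  have [Hle1 Hle2] := @half_weights k r f g (fun i _ => erefl).
  have HY0 := @EY k r f g. have HN0 := @EN k r f g.
  have HYv := @WY_upd k r f g v. have HNv := @WN_upd k r f g v Hv.
  have HC := sum_C_eq r k.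
  have HBr : binom_le r k <= B by apply: bl_mono_r; rewrite /r; lia.
  set Wy := Wt k r (Yf f (upd g k v)) in Hcons HYv *.
  set Wn := Wt k r (Nf f (upd g k v)) in Hcons HNv *.
  have HyN : Wy <= Wn /\ Wn <= Wy + binom_le r k.
    rewrite HY0 in HYv. rewrite HN0 in HNv. rewrite /v in HYv HNv. split; lia.
  have Hhalf : forall j, j <= k -> upd g k v j = f j %/ 2.
    move=> j Hj. rewrite /upd. case: eqP => [->|] //.
  have Hpow : 2 ^ t.+1 = 2 ^ t * 2 by rewrite expnS mulnC.
  set Wf := Wt k r.+1 f in L1 U1 Hcons.
  have Ht2 : t.+1 + n = k by lia.
  apply: (pw_step (g := g) (v := v)) => //.
  + apply: (IH t.+1) => //.
    * apply: (Track_step HT) => i Hi. apply: half_Y => j Hj. apply: Hhalf. exact: leq_trans Hj _.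
    * rewrite Hpow -mulnA. apply: leq_trans L1 _. rewrite leq_mul2l. apply/orP; right.
      rewrite /Wy /Wn /Wf /r in Hcons HyN HBr *. lia.
    * rewrite Hpow. move: U1. rewrite /Wy /Wn /Wf /r in Hcons HyN HBr *. set P := 2 ^ t. nia.
  + apply: (IH t.+1) => //.
    * apply: (Track_step HT) => i Hi. apply: half_N => j Hj. apply: Hhalf. exact: leq_trans Hj _.
    * rewrite Hpow -mulnA. apply: leq_trans L1 _. rewrite leq_mul2l. apply/orP; right.
      rewrite /Wy /Wn /Wf /r in Hcons HyN HBr *. lia.
    * rewrite Hpow. move: U1. rewrite /Wy /Wn /Wf /r in Hcons HyN HBr *. set P := 2 ^ t. nia.
Qed.

Lemma add3_perm (a b S : nat) : a + S + b = b + S + a.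
Proof. lia. Qed.

Lemma sum_upd k (F : nat -> nat -> nat) (f : nat -> nat) (j : 'I_k.+1) v :
  \sum_(i < k.+1) F i (upd f j v i) + F j (f j) = \sum_(i < k.+1) F i (f i) + F j v.
Proof.
rewrite (bigD1 j) // [X in _ = X + _](bigD1 j) //= /upd eqxx.
have -> : \sum_(i < k.+1 | i != j) F i (if nat_of_ord i == nat_of_ord j then v else f i) =
          \sum_(i < k.+1 | i != j) F i (f i).
  apply: eq_bigr => i Hij. have Hij' : (nat_of_ord i == nat_of_ord j) = false by apply/negbTE.
  by rewrite Hij'.
exact: add3_perm.
Qed.

Lemma reduce k q T (f : nat -> nat) : T <= Wt k q f ->
  exists y, (forall i, i <= k -> y i <= f i) /\ T <= Wt k q y /\ Wt k q y <= T + binom_le q k.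
Proof.
suff : forall n (f : nat -> nat), \sum_(i < k.+1) f i <= n -> T <= Wt k q f ->
  exists y, (forall i, i <= k -> y i <= f i) /\ T <= Wt k q y /\ Wt k q y <= T + binom_le q k.
  by move=> H; apply: H (leqnn _).
elim=> [|n IH] {}f Hn HT.
- exists f; split => //; split => //.
  have -> : Wt k q f = 0.
    rewrite /Wt big1 // => i _. move: Hn; rewrite leqn0 sum_nat_eq0 => /forallP /(_ i) /eqP ->.
    done.
  exact: leq_addr.
- case: (leqP (Wt k q f) (T + binom_le q k)) => HW.
    by exists f; split.
  case: (pickP (fun j : 'I_k.+1 => 0 < f j)) => [j Hj|H0]; last first.
    have : Wt k q f = 0.
      rewrite /Wt big1 // => i _. by have := H0 i; rewrite lt0n => /negbFE/eqP ->.
    lia.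
  pose f' := upd f j (f j - 1).
  have E1 := @sum_upd k (fun i x => x) f j (f j - 1).
  have E2 := @sum_upd k (fun i x => x * binom_le q (k - i)) f j (f j - 1).
  have E1' : \sum_(i < k.+1) f' i + f j = \sum_(i < k.+1) f i + (f j - 1) := E1.
  have E2' : Wt k q f' + f j * binom_le q (k - j) = Wt k q f + (f j - 1) * binom_le q (k - j) := E2.
  clear E1 E2.
  have HB : binom_le q (k - j) <= binom_le q k by apply: bl_mono_m; exact: leq_subr.
  have [y [Hy1 [Hy2 Hy3]]] : exists y, (forall i, i <= k -> y i <= f' i) /\
      T <= Wt k q y /\ Wt k q y <= T + binom_le q k.
    apply: IH.
    + move: Hn E1'. lia.
    + move: E2'. nia.
  exists y; split => // i Hi. apply: leq_trans (Hy1 i Hi) _. rewrite /f' /upd.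
  case: eqP => [->|] //. exact: leq_subr.
Qed.

Lemma bin_le_bl q k : 'C(q, k) <= binom_le q k.
Proof. rewrite /binom_le big_ord_recr /=. exact: leq_addl. Qed.

Lemma aux_H3 (P Cc k1 B X : nat) : 0 < B ->
  B * P * (Cc * B + k1) <= (P * (Cc + k1) + X) * (B * B).
Proof.
move=> HB.
have E : B * P * (Cc * B + k1) = P * (Cc * (B * B)) + P * (k1 * B).
  rewrite !mulnDr !mulnA. congr (_ + _); first by rewrite [B * P]mulnC -!mulnA [B * (Cc * B)]mulnCA.
  by rewrite [B * P]mulnC -mulnA [B * k1]mulnC mulnA.
rewrite E mulnDl mulnDr mulnDl -!mulnA. rewrite -addnA. apply: leq_add => //.
apply: leq_trans (leq_addr _ _). rewrite leq_mul2l. apply/orP; right.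
rewrite leq_mul2l. apply/orP; right. by rewrite -{1}(muln1 B) leq_mul2l HB orbT.
Qed.

Theorem theorem8 : forall k : nat, exists c1 qstar : nat,
  forall q : nat, qstar <= q ->
  forall x : state k, 2 ^ q + c1 * 'C(q, k) <= wt q x -> paul_wins q x.
Proof.
move=> k.
pose M := k * k.
have HMs : \sum_(i < k) i.+1 <= M.
  apply: (@leq_trans (\sum_(i < k) k)); first by apply: leq_sum => i _; exact: ltn_ord.
  by rewrite sum_nat_const card_ord.
have [R2' HR2'] := growthB (2 * M) k.
pose R2 := R2'.+1.
have HR2 : 0 < R2 by [].
have HM : forall s, R2 <= s -> 2 * M * binom_le s k <= 2 ^ s.
  move=> s Hs. apply: leq_trans (HR2' s (ltnW Hs)). rewrite leq_mul2l. apply/orP; right.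
  rewrite -{1}(muln1 (binom_le s k)) leq_mul2l bl_gt0 orbT //.
have [R1' HR1'] := growthB (2 ^ k * (M + 2)) k.
pose R1 := R1' + (R2 + k * M).
have HR1 : R2 + k * M <= R1 by rewrite /R1 leq_addl.
have HR1p : forall s, R1 <= s -> 2 ^ k * (M + 2) * (binom_le s k * binom_le s k) <= 2 ^ s.
  move=> s Hs. apply: HR1'. apply: leq_trans Hs. exact: leq_addr.
pose A := 2 ^ k * (2 ^ k * (M + 2) + k.+1) + (4 ^ k + 2 ^ k + 1).
have [Q HQ] := growthB A k.
exists (4 ^ k), (Q + k + R1 + k * (2 ^ R1.+2 + 1)).
move=> q Hq x Hx.
apply: pw_paul.
set xs := fun i => x (inord i).
have Ewt : wt q x = Wt k q xs.
  rewrite /wt /Wt. apply: eq_bigr => i _. by rewrite /xs inord_val.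
rewrite Ewt in Hx.
set B := binom_le q k.
have Hkq : k <= q by lia.
have HQq : A * (B * B) <= 2 ^ q by apply: HQ; lia.
have HBpos : 0 < B := bl_gt0 q k.
have HBC : B <= 2 ^ k * 'C(q, k) := bl_C Hkq.
have HCB : 'C(q, k) <= B := bin_le_bl q k.
have E4 : 4 ^ k = 2 ^ k * 2 ^ k by rewrite -expnMn.
have [y [Hy1 [Hy2 Hy3]]] := reduce Hx.
apply: (pw_mono Hy1).
have HBB : B <= B * B by rewrite -{1}(muln1 B) leq_mul2l HBpos orbT.
have Hl : 2 ^ q + 2 ^ k * B <= Wt k q y.
  apply: leq_trans Hy2. rewrite leq_add2l E4 -mulnA leq_mul2l HBC orbT //.
have Hu : Wt k q y + 2 ^ k * B <= 2 ^ q.+1.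
  rewrite expnS.
  have h3 : A * B <= 2 ^ q by apply: leq_trans HQq; rewrite leq_mul2l HBB orbT.
  have h1 : 4 ^ k * 'C(q, k) <= 4 ^ k * B by rewrite leq_mul2l HCB orbT.
  have h2 : 4 ^ k * B + 2 ^ k * B + B <= A * B.
    rewrite /A mulnDl. apply: leq_trans (leq_addl _ _). rewrite !mulnDl mul1n. done.
  move: h1 h2 h3 Hy3. set a := 4 ^ k * 'C(q, k). set b := 4 ^ k * B. set c := 2 ^ k * B.
  set d := A * B. set w := Wt k q y. lia.
have H3 : B * 2 ^ k * (2 ^ k * (M + 2) * B + k.+1) <= 2 ^ q.
  apply: leq_trans HQq. rewrite /A. exact: aux_H3.
have HR1q : R1 <= q - k by lia.
have Hr0 : k * (2 ^ R1.+2 + 1) <= q - k by lia.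
have H := @phase1 k M R2 R1 q y HR2 HM HMs HR1 HR1p Hl Hu H3 Hkq HR1q Hr0 k 0 y (add0n k) (@Track0 k.+1 y).
rewrite subn0 expn0 !mul1n in H. exact: H.
Qed.
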